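(* Let $(X,d)$ be a complete metric space with $|X|\geqslant 3$ and let $T\colon X\to X$ be asymptotically regular and satisfy, for some $\alpha\in[0,\frac12)$ and $\lambda\in[0,1)$, $$d(Tx,Ty)+d(Ty,Tz)+d(Tx,Tz)\leqslant \alpha\big(d(x,y)+d(y,z)+d(z,x)\big)+\lambda\big(d(x,Tx)+d(y,Ty)+d(z,Tz)\big)$$ for all pairwise distinct $x,y,z\in X$. Then $T$ has a fixed point, and $T$ has at most two fixed points.
   Context: A mapping $T\colon X\to X$ on a metric space is asymptotically regular if $\lim_{n\to\infty}d(T^{n+1}x,T^nx)=0$ for every $x\in X$. *)

(* Defs.v *)
From Stdlib Require Export Reals.
Open Scope R_scope.

Definition is_metric {X : Type} (d : X -> X -> R) : Prop :=
  (forall x y, 0 <= d x y) /\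
  (forall x y, d x y = 0 <-> x = y) /\
  (forall x y, d x y = d y x) /\
  (forall x y z, d x z <= d x y + d y z).

Definition cauchy_seq {X : Type} (d : X -> X -> R) (u : nat -> X) : Prop :=
  forall eps, 0 < eps -> exists N, forall m n, (N <= m)%nat -> (N <= n)%nat ->
    d (u m) (u n) < eps.

Definition converges_to {X : Type} (d : X -> X -> R) (u : nat -> X) (l : X) : Prop :=
  forall eps, 0 < eps -> exists N, forall n, (N <= n)%nat -> d (u n) l < eps.

Definition complete_metric {X : Type} (d : X -> X -> R) : Prop :=
  forall u, cauchy_seq d u -> exists l, converges_to d u l.

Definition iter {X : Type} (n : nat) (T : X -> X) (x : X) : X := Nat.iter n T x.

Definition asymptotically_regular {X : Type} (d : X -> X -> R) (T : X -> X) : Prop :=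
  forall x, Un_cv (fun n => d (iter (S n) T x) (iter n T x)) 0.

(* Main.v *)
Require Import Defs.
From Stdlib Require Import Reals.
From Stdlib Require Import Lra Psatz Classical.
Open Scope R_scope.

Lemma small0 (c : R) : 0 <= c -> (forall eps, 0 < eps -> c < eps) -> c = 0.
Proof.
  intros H0 H. destruct (Rle_lt_dec c 0) as [h|h]; [lra|].
  specialize (H c h); lra.
Qed.

Theorem theorem4p3 (X : Type) (d : X -> X -> R) (T : X -> X) (alpha lambda : R) :
  is_metric d ->
  complete_metric d ->
  (exists a b c : X, a <> b /\ b <> c /\ a <> c) ->
  asymptotically_regular d T ->
  0 <= alpha -> alpha < 1/2 ->
  0 <= lambda -> lambda < 1 ->
  (forall x y z : X, x <> y -> y <> z -> x <> z ->
     d (T x) (T y) + d (T y) (T z) + d (T x) (T z)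
     <= alpha * (d x y + d y z + d z x)
        + lambda * (d x (T x) + d y (T y) + d z (T z))) ->
  (exists x, T x = x) /\
  (forall x y z : X, T x = x -> T y = y -> T z = z -> x = y \/ y = z \/ x = z).
Proof.
  intros [dpos [dzero [dsym dtri]]] Hcomp [x0 _] Har Ha0 Ha1 Hl0 Hl1 H.
  split.
  2: {
    intros x y z Hx Hy Hz.
    destruct (classic (x = y)) as [|nxy]; [now left|].
    destruct (classic (y = z)) as [|nyz]; [now right; left|].
    destruct (classic (x = z)) as [|nxz]; [now right; right|].
    exfalso. specialize (H x y z nxy nyz nxz). rewrite Hx, Hy, Hz in H.
    pose proof (dpos x y); pose proof (dpos y z); pose proof (dpos x z).
    rewrite (dsym z x) in H.
    assert (Hs : (1 - alpha) * (d x y + d y z + d x z) <= 0).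
    { rewrite (proj2 (dzero x x) eq_refl) in H. rewrite (proj2 (dzero y y) eq_refl) in H.
      rewrite (proj2 (dzero z z) eq_refl) in H. lra. }
    assert (Hs2 : d x y + d y z + d x z <= 0).
    { destruct (Rle_lt_dec (d x y + d y z + d x z) 0); [assumption|].
      assert (0 < (1 - alpha) * (d x y + d y z + d x z)) by (apply Rmult_lt_0_compat; lra). lra. }
    assert (d x y = 0) by lra. apply nxy. now apply dzero.
  }
  destruct (classic (exists x, T x = x)) as [|Hnf]; [assumption|].
  exfalso.
  assert (Hnf' : forall x, T x <> x) by (intros x e; apply Hnf; exists x; exact e).
  set (u := fun n => iter n T x0).
  assert (Hu : forall n, u (S n) = T (u n)) by reflexivity.
  set (a := fun n => d (u (S n)) (u n)).
  assert (apos : forall n, 0 <= a n) by (intros; apply dpos).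
  assert (ha : forall eps, 0 < eps -> exists N, forall n, (N <= n)%nat -> a n < eps).
  { intros eps he. destruct (Har x0 eps he) as [N HN]. exists N. intros n hn.
    specialize (HN n hn). unfold R_dist in HN. rewrite Rminus_0_r in HN.
    rewrite Rabs_right in HN by (apply Rle_ge, dpos). exact HN. }
  assert (Hb : forall n m, (1 - 2*alpha) * d (u n) (u m) <= 3 * (a n + a m + a (S n))).
  { intros n m.
    pose proof (apos n); pose proof (apos m); pose proof (apos (S n)).
    destruct (classic (u n = u m)) as [e|nnm].
    { rewrite e. rewrite (proj2 (dzero _ _) eq_refl). lra. }
    destruct (classic (u m = u (S n))) as [e|nmS].
    { rewrite e. rewrite dsym. fold (a n). nra. }
    assert (nnS : u n <> u (S n)) by (rewrite Hu; intro e; apply (Hnf' (u n)); auto).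
    specialize (H _ _ _ nnm nmS nnS).
    rewrite <- !Hu in H.
    pose proof (dtri (u n) (u (S n)) (u m)).
    pose proof (dtri (u (S n)) (u (S m)) (u m)).
    pose proof (dtri (u m) (u n) (u (S n))).
    pose proof (dpos (u (S m)) (u (S (S n)))).
    pose proof (dpos (u (S n)) (u (S (S n)))).
    pose proof (dpos (u m) (u (S n))).
    pose proof (dpos (u n) (u m)).
    assert (e1 : d (u n) (u (S n)) = a n) by (unfold a; apply dsym).
    assert (e2 : d (u m) (u (S m)) = a m) by (unfold a; apply dsym).
    assert (e3 : d (u (S n)) (u (S (S n))) = a (S n)) by (unfold a; apply dsym).
    assert (e4 : d (u (S m)) (u m) = a m) by reflexivity.
    rewrite (dsym (u (S n)) (u n)) in H.
    rewrite (dsym (u m) (u n)) in *.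
    rewrite e1, e2, e3 in *. rewrite e4 in *.
    nra. }
  assert (Hc : cauchy_seq d u).
  { intros eps he.
    assert (hd : 0 < eps * (1 - 2*alpha) / 9) by (apply Rmult_lt_0_compat; [nra|lra]).
    destruct (ha _ hd) as [N HN]. exists N. intros n m hn hm.
    pose proof (HN n hn); pose proof (HN m hm); pose proof (HN (S n) ltac:(lia)).
    pose proof (Hb n m).
    apply (Rmult_lt_reg_l (1 - 2*alpha)); [lra|]. nra. }
  destruct (Hcomp u Hc) as [l Hl].
  assert (Hf : forall n, (1 - lambda) * d l (T l) <=
            2 * (d (u n) l + d (u (S n)) l) + 3 * (a n + a (S n))).
  { intros n.
    pose proof (apos n); pose proof (apos (S n)).
    pose proof (dpos (u n) l); pose proof (dpos (u (S n)) l).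
    destruct (classic (u n = l)) as [e|n1].
    { rewrite <- e, <- Hu. rewrite (dsym (u n) (u (S n))). fold (a n).
      assert ((1 - lambda) * a n <= a n) by nra. pose proof (dpos (u n) (u n)). lra. }
    destruct (classic (l = u (S n))) as [e|n2].
    { rewrite e, <- Hu. rewrite (dsym (u (S n)) (u (S (S n)))). fold (a (S n)).
      assert ((1 - lambda) * a (S n) <= a (S n)) by nra. pose proof (dpos (u (S n)) (u (S n))). pose proof (dpos (u n) (u (S n))). lra. }
    assert (nnS : u n <> u (S n)) by (rewrite Hu; intro e; apply (Hnf' (u n)); auto).
    specialize (H _ _ _ n1 n2 nnS).
    rewrite <- !Hu in H.
    pose proof (dtri l (u (S n)) (T l)).
    pose proof (dpos (T l) (u (S (S n)))).
    pose proof (dpos (u (S n)) (u (S (S n)))).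
    pose proof (dpos l (T l)).
    assert (e1 : d (u n) (u (S n)) = a n) by (unfold a; apply dsym).
    assert (e3 : d (u (S n)) (u (S (S n))) = a (S n)) by (unfold a; apply dsym).
    assert (e4 : d (u (S n)) (u n) = a n) by reflexivity.
    rewrite (dsym l (u (S n))) in *.
    rewrite e1, e3, e4 in *.
    rewrite (dsym (u (S n)) (T l)) in *.
    nra. }
  assert (Hz : d l (T l) = 0).
  { apply small0; [apply dpos|]. intros eps he.
    assert (hd : 0 < (1 - lambda) * eps / 10) by (apply Rmult_lt_0_compat; [nra|lra]).
    destruct (ha _ hd) as [N1 HN1]. destruct (Hl _ hd) as [N2 HN2].
    set (n := (N1 + N2)%nat).
    pose proof (HN1 n ltac:(unfold n; lia)); pose proof (HN1 (S n) ltac:(unfold n; lia)).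
    pose proof (HN2 n ltac:(unfold n; lia)); pose proof (HN2 (S n) ltac:(unfold n; lia)).
    pose proof (Hf n).
    apply (Rmult_lt_reg_l (1 - lambda)); [lra|]. nra. }
  apply (Hnf' l). symmetry. now apply dzero.
Qed.
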